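(* Let $\mathcal{X}$ be a finite set of $n$ items and let $\mathcal{S}$ be a collection of distinct subsets of $\mathcal{X}$, each of size at least $2$. Let $G(\mathcal{S})$ be the integer matrix with one row $g_{x,C}^{T}$ for each $C\in\mathcal{S}$ and each $x\in C$. Then the full-rank CDM is identifiable up to a shift from the choice probabilities on $\mathcal{S}$ — i.e. whenever $u,u'\in\mathbb{R}^{n(n-1)}$ satisfy $P_u(x\mid C)=P_{u'}(x\mid C)$ for all $C\in\mathcal{S}$, $x\in C$, we have $u'-u=\alpha\mathbf{1}$ for some $\alpha\in\mathbb{R}$ — if and only if $\mathrm{rank}(G(\mathcal{S}))=n(n-1)-1$.
   Context: A (full-rank) CDM on $\mathcal{X}$ has parameter vector $u=(u_{xz})_{x\neq z}\in\mathbb{R}^{n(n-1)}$ and choice probabilities, for $C\subseteq\mathcal{X}$, $|C|\ge2$, $x\in C$, $P_u(x\mid C)=\dfrac{\exp\big(\sum_{z\in C\setminus\{x\}}u_{xz}\big)}{\sum_{y\in C}\exp\big(\sum_{z\in C\setminus\{y\}}u_{yz}\big)}$. For a set $C$ and $x\in C$, $g_{x,C}\in\mathbb{Z}^{n(n-1)}$ is the integer vector with $g_{x,C}^{T}u=\sum_{y\in C\setminus\{x\}}\Big([u_{xy}-u_{yx}]+\sum_{z\in C\setminus\{x,y\}}[u_{xz}-u_{yz}]\Big)$ for all $u$. $\mathbf{1}$ denotes the all-ones vector. *)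

(* Defs.v *)
From HB Require Import structures.
From mathcomp Require Import all_boot all_order all_algebra.
From mathcomp Require Import reals.
From mathcomp Require Import sequences exp.
Set Implicit Arguments. Unset Strict Implicit. Unset Printing Implicit Defensive.
Import Order.TTheory GRing.Theory Num.Theory.
Local Open Scope ring_scope.

(* Index set of the CDM parameters: ordered pairs (x, z) with x <> z.
   Its cardinality is n(n-1). *)
Notation offdiag X := {p : X * X | p.1 != p.2}.

(* Read parameter u_{xz} (value 0 on the diagonal, which never occurs below). *)
Definition upar (X : finType) (R : nmodType) (u : offdiag X -> R) (x z : X) : R :=
  match @insub _ (fun p : X * X => p.1 != p.2) _ (x, z) with
  | Some d => u d
  | None => 0
  end.

Definition cdmP (R : realType) (X : finType) (u : offdiag X -> R)
    (C : {set X}) (x : X) : R :=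
  expR (\sum_(z in C :\ x) upar u x z) /
  \sum_(y in C) expR (\sum_(z in C :\ y) upar u y z).

Definition glin (R : zmodType) (X : finType) (C : {set X}) (x : X)
    (u : X -> X -> R) : R :=
  \sum_(y in C :\ x)
    ((u x y - u y x) + \sum_(z in C :\ x :\ y) (u x z - u y z)).

(* The integer vector g_{x,C}: its coordinate at (a,b) is the coefficient of
   u_{ab} in the linear form above. *)
Definition gvec (X : finType) (C : {set X}) (x : X) (d : offdiag X) : int :=
  glin C x (fun a b : X => if (a, b) == val d then 1 else 0).

Notation rowidx X S :=
  {p : {set X} * X | (p.1 \in S) && (p.2 \in p.1)}.

Definition Gmat (X : finType) (S : {set {set X}}) :
    'M[int]_(#|{: rowidx X S}|, #|{: offdiag X}|) :=
  \matrix_(i, j) gvec (val (enum_val i)).1 (val (enum_val i)).2 (enum_val j).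

(* Main.v *)
Require Import Defs.
From HB Require Import structures.
From mathcomp Require Import all_boot all_order all_algebra.
From mathcomp Require Import reals.
From mathcomp Require Import sequences exp.
From mathcomp Require Import ring zify.
Import Order.TTheory GRing.Theory Num.Theory.
Local Open Scope ring_scope.
Set Implicit Arguments. Unset Strict Implicit. Unset Printing Implicit Defensive.
Section Aux.
Variable R : realType.
Variable X : finType.

Definition Lf (u : X -> X -> R) (C : {set X}) (x : X) : R :=
  \sum_(z in C :\ x) u x z.

Lemma glin_L (u : X -> X -> R) (C : {set X}) (x : X) : x \in C ->
  glin C x u = \sum_(y in C) (Lf u C x - Lf u C y).
Proof.
move=> xC; rewrite (big_setD1 x xC) /= subrr add0r /glin.
apply: eq_bigr => y; rewrite in_setD1 => /andP [yx yC].
have yCx : y \in C :\ x by rewrite in_setD1 yx yC.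
have xCy : x \in C :\ y by rewrite in_setD1 eq_sym yx xC.
have E1 : Lf u C x = u x y + \sum_(i in C :\ x :\ y) u x i.
  by rewrite /Lf (big_setD1 y yCx).
have E2 : Lf u C y = u y x + \sum_(i in C :\ x :\ y) u y i.
  rewrite /Lf (big_setD1 x xCy); congr (_ + _).
  by apply: eq_bigl => z; rewrite !in_setD1 andbCA.
by rewrite E1 E2 sumrB opprD addrACA.
Qed.

Lemma glin_L2 (u : X -> X -> R) (C : {set X}) (x : X) : x \in C ->
  glin C x u = #|C|%:R * Lf u C x - \sum_(y in C) Lf u C y.
Proof. by move=> xC; rewrite glin_L // sumrB sumr_const mulr_natl. Qed.

Lemma glin0_iff (u : X -> X -> R) (C : {set X}) :
  (forall x, x \in C -> glin C x u = 0) <->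
  (forall x y, x \in C -> y \in C -> Lf u C x = Lf u C y).
Proof.
split=> [H x y xC yC | H x xC].
  have cn : (#|C|%:R : R) != 0.
    by rewrite pnatr_eq0 -lt0n; apply/card_gt0P; exists x.
  apply: (mulfI cn); move: (H x xC) (H y yC).
  rewrite !glin_L2 // => /eqP; rewrite subr_eq0 => /eqP ->.
  by move/eqP; rewrite subr_eq0 => /eqP ->.
rewrite glin_L //; apply: big1 => y yC; by rewrite (H x y) // subrr.
Qed.

Lemma glin_eq (C : {set X}) (x : X) (u v : X -> X -> R) : (forall a b, u a b = v a b) ->
  glin C x u = glin C x v.
Proof.
move=> H; rewrite /glin; apply: eq_bigr => y _; rewrite !H; congr (_ + _).
by apply: eq_bigr => z _; rewrite !H.
Qed.

Lemma glin_scale (C : {set X}) (x : X) (c : R) (u : X -> X -> R) :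
  glin C x (fun a b => c * u a b) = c * glin C x u.
Proof.
rewrite /glin mulr_sumr; apply: eq_bigr => y _.
rewrite mulrDr mulrBr mulr_sumr; congr (_ + _).
by apply: eq_bigr => z _; rewrite mulrBr.
Qed.

Lemma glin_intr (C : {set X}) (x : X) (u : X -> X -> int) :
  (glin C x u)%:~R = glin C x (fun a b => (u a b)%:~R : R).
Proof.
rewrite /glin rmorph_sum; apply: eq_bigr => y _.
rewrite rmorphD rmorphB rmorph_sum /=; congr (_ + _).
by apply: eq_bigr => z _; rewrite rmorphB.
Qed.

Lemma glin_sum (I : finType) (C : {set X}) (x : X) (F : I -> X -> X -> R) :
  glin C x (fun a b => \sum_(i : I) F i a b) = \sum_(i : I) glin C x (F i).
Proof.
rewrite /glin -exchange_big /=; apply: eq_bigr => y _.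
rewrite -sumrB.
have -> : \sum_(z in C :\ x :\ y) (\sum_i F i x z - \sum_i F i y z) =
  \sum_i \sum_(z in C :\ x :\ y) (F i x z - F i y z).
  rewrite exchange_big /=; apply: eq_bigr => z _; by rewrite sumrB.
by rewrite -big_split.
Qed.

End Aux.
Section Aux2.
Variable R : realType.
Variable X : finType.

Lemma upar_ind (w : offdiag X -> R) (a b : X) :
  \sum_d w d * ((if (a, b) == val d then 1 else 0 : int))%:~R = upar w a b.
Proof.
rewrite /upar; case: insubP => [d0 _ hd0 | hn].
  rewrite (bigD1 d0) //= -hd0 eqxx mulr1 big1 ?addr0 // => d hd.
  case: ifP => [/eqP h|]; last by rewrite mulr0.
  by exfalso; move/negP: hd; apply; apply/eqP/val_inj; rewrite /= -h.
apply: big1 => d _; case: ifP => [/eqP h|]; last by rewrite mulr0.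
by exfalso; move/negP: hn; apply; rewrite h; case: d {h}.
Qed.

Lemma uparB (u u' : offdiag X -> R) a b :
  upar (fun d => u' d - u d) a b = upar u' a b - upar u a b.
Proof. by rewrite /upar; case: insubP => [d0 _ _|_]; rewrite ?subr0. Qed.

Lemma entry (S : {set {set X}}) (w : offdiag X -> R) i :
  ((\row_j w (enum_val j)) *m (map_mx (fun k : int => k%:~R : R) (Gmat S))^T) 0 i
  = glin (val (enum_val i)).1 (val (enum_val i)).2 (upar w).
Proof.
rewrite mxE (reindex enum_rank) /=; last first.
  by apply: onW_bij; apply: enum_rank_bij.
under eq_bigr => d _ do rewrite !mxE enum_rankK /gvec glin_intr -glin_scale.
rewrite -glin_sum; apply: glin_eq => a b.
by rewrite -upar_ind; apply: eq_bigr => d _; congr (_ * _).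

Qed.

End Aux2.
Section Aux3.
Variable R : realType.
Variable X : finType.

Lemma LfB (u u' : offdiag X -> R) C x :
  Lf (upar (fun d => u' d - u d)) C x = Lf (upar u') C x - Lf (upar u) C x.
Proof. by rewrite /Lf -sumrB; apply: eq_bigr => z _; rewrite uparB. Qed.

Lemma Zpos (u : offdiag X -> R) (C : {set X}) x : x \in C ->
  0 < \sum_(y in C) expR (Lf (upar u) C y).
Proof.
move=> xC; rewrite (big_setD1 x xC) /=.
apply: ltr_wpDr; first by apply: sumr_ge0 => y _; apply: ltW; apply: expR_gt0.
exact: expR_gt0.
Qed.

Lemma cdm_iff (u u' : offdiag X -> R) (C : {set X}) :
  (forall x, x \in C -> cdmP u C x = cdmP u' C x) <->
  (forall x, x \in C -> glin C x (upar (fun d => u' d - u d)) = 0).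
Proof.
rewrite glin0_iff.
set a := Lf (upar u) C; set b := Lf (upar u') C.
set Z := \sum_(y in C) expR (a y); set Z' := \sum_(y in C) expR (b y).
have cE : forall v x, cdmP v C x = expR (Lf (upar v) C x) /
   \sum_(y in C) expR (Lf (upar v) C y) by [].
split=> [H x y xC yC | H x xC].
  have Zn : Z != 0 by rewrite gt_eqF // (Zpos u xC).
  have Zn' : Z' != 0 by rewrite gt_eqF // (Zpos u' xC).
  have K : forall t, t \in C -> expR (b t - a t) = Z' / Z.
    move=> t tC; have := H t tC; rewrite !cE -/a -/b -/Z -/Z' => Ht.
    have Hb : expR (b t) = expR (a t) / Z * Z' by rewrite Ht divfK.
    rewrite expRB Hb; have ea : expR (a t) != 0 by rewrite gt_eqF // expR_gt0.
    by field; rewrite ea Zn.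
  rewrite !LfB; apply: expR_inj; by rewrite K // K.
have Hc : forall y, y \in C -> b y = a y + Lf (upar (fun d => u' d - u d)) C x.
  by move=> y yC; rewrite (H x y xC yC) LfB /b /a addrC subrK.
rewrite !cE -/a -/b -/Z.
have -> : \sum_(y in C) expR (Lf (upar u') C y) = Z * expR (Lf (upar (fun d => u' d - u d)) C x).
  rewrite /Z mulr_suml; apply: eq_bigr => y yC.
  by rewrite -/(b y) Hc // expRD.
rewrite -/(b x) Hc // expRD.
have Zn : Z != 0 by rewrite gt_eqF // (Zpos u xC).
have ea : expR (Lf (upar (fun d => u' d - u d)) C x) != 0 by rewrite gt_eqF // expR_gt0.
by field; rewrite ea Zn.
Qed.

End Aux3.
Section Aux4.
Variable R : realType.
Variable X : finType.
Variable S : {set {set X}}.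

Notation M := (map_mx (fun k : int => k%:~R : R) (Gmat S)).

Lemma kerP (w : offdiag X -> R) :
  (forall C x, C \in S -> x \in C -> glin C x (upar w) = 0) <->
  (\row_j w (enum_val j)) *m M^T = 0.
Proof.
split=> [H | H C x CS xC].
  apply/rowP => i; rewrite entry mxE.
  by case: (enum_val i) => -[C x] /= /andP [CS xC]; apply: H.
have p : (((C, x) : {set X} * X).1 \in S) && (((C, x) : {set X} * X).2 \in ((C, x) : {set X} * X).1).
  by rewrite /= CS xC.
pose q : rowidx X S := Sub (C, x) p.
move/rowP: H => /(_ (enum_rank q)).
by rewrite entry enum_rankK mxE.
Qed.

Lemma card_off : #|{: offdiag X}| = (#|X| * (#|X| - 1))%N.
Proof.
rewrite card_sig.
have D : #|[pred p : X * X | p.1 == p.2]| = #|X|.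
  rewrite -(@card_image _ _ (fun x : X => (x, x))); last by move=> a b [].
  apply: eq_card => -[a b] /=; apply/idP/idP.
    rewrite inE /= => /eqP ->; apply/imageP; by exists b.
  by case/imageP => c _ [-> ->]; rewrite inE /=.
have := cardC [pred p : X * X | p.1 == p.2].
rewrite card_prod D.
have -> : #|[predC [pred p : X * X | p.1 == p.2]]| = #|[pred p : X * X | p.1 != p.2]|.
  by apply: eq_card.
rewrite mulnBr muln1; lia.
Qed.

Lemma one_ker : (const_mx 1 : 'rV[R]_#|{: offdiag X}|) *m M^T = 0.
Proof.
have -> : (const_mx 1 : 'rV[R]_#|{: offdiag X}|) = \row_j (fun _ => 1 : R) (enum_val j).
  by apply/rowP => j; rewrite !mxE.
apply: (proj1 (kerP (fun _ : offdiag X => 1 : R))) => C x CS xC; move: x xC; apply/glin0_iff => x y xC yC.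
have E : forall t, t \in C -> Lf (upar (fun _ : offdiag X => 1 : R)) C t = (#|C| - 1)%N%:R.
  move=> t tC; rewrite /Lf.
  rewrite (eq_bigr (fun _ => 1)); last first.
    move=> z; rewrite in_setD1 => /andP [zt _]; rewrite /upar; case: insubP => //=.
    by rewrite eq_sym zt.
  by rewrite sumr_const (cardsD1 t C) tC add1n subn1 /=.
by rewrite !E.
Qed.

End Aux4.
Unset Implicit Arguments. Set Strict Implicit.
Theorem lemma2 (R : realType) (X : finType) (S : {set {set X}})
    (hS : forall C, C \in S -> (2 <= #|C|)%N) :
  (forall u u' : offdiag X -> R,
     (forall C x, C \in S -> x \in C -> cdmP u C x = cdmP u' C x) ->
     exists alpha : R, forall d, u' d - u d = alpha)
  <->
  \rank (map_mx (fun k : int => k%:~R : R) (Gmat S)) = (#|X| * (#|X| - 1) - 1)%N.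
Proof.
set M := map_mx _ (Gmat S).
rewrite -card_off.
set N := #|{: offdiag X}| in M *.
have LE : (forall u u' : offdiag X -> R,
     (forall C x, C \in S -> x \in C -> cdmP u C x = cdmP u' C x) ->
     exists alpha : R, forall d, u' d - u d = alpha) <->
   (forall v : 'rV[R]_N, v *m M^T = 0 -> exists alpha : R, forall j, v 0 j = alpha).
  split=> [H v Hv | H u u' Huu].
    pose w : offdiag X -> R := fun d => v 0 (enum_rank d).
    have vE : v = \row_j w (enum_val j) by apply/rowP => j; rewrite mxE /w enum_valK.
    have [al Hal] : exists alpha : R, forall d, w d - 0 = alpha.
      apply: H => C x CS xC; move: x xC; apply/cdm_iff => x xC.
      have -> : glin C x (upar (fun d => w d - 0)) = glin C x (upar w).
        by apply: glin_eq => a b; rewrite /upar; case: insubP => // *; rewrite subr0.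
      by apply: (proj2 (kerP S w) _ C x CS xC); rewrite -vE.
    by exists al => j; rewrite -(Hal (enum_val j)) subr0 /w enum_valK.
  pose w := fun d => u' d - u d.
  have := proj1 (kerP S w) (fun C x CS xC => proj1 (cdm_iff u u' C) (Huu C ^~ CS) x xC).
  move/H => [al Hal]; exists al => d; rewrite -(Hal (enum_rank d)) mxE enum_rankK //.
rewrite LE.
have rM : (\rank M <= N)%N by apply: rank_leq_col.
case: (posnP N) => [N0 | Npos].
  split=> [_ | _ v _]; first by lia.
  by exists 0 => j; exfalso; have := ltn_ord j; lia.
pose o : 'rV[R]_N := const_mx 1.
have oK : (o <= kermx M^T)%MS by apply/sub_kermxP; apply: one_ker.
have o0 : o != 0.
  apply/negP => /eqP /rowP /(_ (Ordinal Npos)); rewrite !mxE => /eqP.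
  by rewrite oner_eq0.
have ro : \rank o = 1%N.
  apply/eqP; rewrite eqn_leq rank_leq_row lt0n mxrank_eq0 o0 //.
have rK : \rank (kermx M^T) = (N - \rank M)%N by rewrite mxrank_ker mxrank_tr.
split=> [H | HM v Hv].
  have Ko : (kermx M^T <= o)%MS.
    apply/row_subP => i.
    have : (row i (kermx M^T) <= kermx M^T)%MS by apply: row_sub.
    move/sub_kermxP/H => [al Hal].
    have -> : row i (kermx M^T) = al *: o.
      by apply/rowP => j; rewrite Hal !mxE mulr1.
    by apply: scalemx_sub; apply: submx_refl.
  have := mxrankS Ko; have := mxrankS oK; rewrite ro rK; lia.
have rK1 : \rank (kermx M^T) = 1%N by rewrite rK; lia.
have := mxrank_leqif_eq oK; rewrite ro rK1 => /leqif_refl /= /andP [_ Ko].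
have : (v <= o)%MS by apply: submx_trans Ko; apply/sub_kermxP.
case/submxP => D ->; exists (D 0 0) => j.
by rewrite !mxE big_ord1 !mxE mulr1.
Qed.
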